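(* Let $n>5f$. The convergence algorithm described in the context, executed by $n$ robots of which at most $f$ are Byzantine, in the CORDA model under a fully asynchronous scheduler, is cautious.
   Context: Setting: $n$ robots on the real line, of which at most $f$ are Byzantine (arbitrary behaviour, positions chosen by an adversary). Robots are anonymous, oblivious, have no common orientation, and have unlimited visibility with strong multiplicity detection. Each correct robot runs Look–Compute–Move cycles. In a Move, the adversary may stop robot $i$ only after it has moved at least $\delta_i>0$ toward its destination (or reached it). In the CORDA model, phases of different robots interleave arbitrarily, so computations may use outdated snapshots. A fully asynchronous scheduler only guarantees that every robot is activated infinitely often. Algorithm: with snapshot sorted $P_1\le\dots\le P_n$ and own position $x_i$, robot $i$ is elected iff $x_i\le P_{f+1}$ or $x_i\ge P_{n-f}$. If elected, it moves toward the midpoint of $\min(x_i,P_{2f+1})$ and $\max(x_i,P_{n-2f})$. This midpoint is the center of $trim^i_{2f}(P)$, the multiset obtained by removing, among the $2f$ smallest positions, those smaller than $x_i$, and, among the $2f$ largest positions, those larger than $x_i$. Cautious: let $D_i(t)$ be the last destination computed by robot $i$ at or before $t$, and $U^i(t)$ the positions of correct robots in $i$'s last observation. The algorithm is cautious if both of the following hold: - $D_i(t)\in[\min U^i(t),\max U^i(t)]$ for every correct $i$ and every $t$; - whenever the correct robots are not all at one point at time $t$, some correct robot $i$ at some time $t'>t$ has $D_i(t')$ different from its position. *)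

(* Defs.v *)
From HB Require Import structures.
From mathcomp Require Import all_boot all_order all_algebra.
From mathcomp Require Import all_classical all_reals all_analysis.
Import Order.TTheory GRing.Theory Num.Theory.
Import numFieldNormedType.Exports.
Local Open Scope classical_set_scope.
Local Open Scope ring_scope.

(* A snapshot P is the sorted (nondecreasing) list of the n observed   *)
(* positions, with multiplicities (strong multiplicity detection).     *)
(* [Pk P k] is P_k with the paper's 1-based indexing.                  *)
Definition Pk {R : realType} (P : seq R) (k : nat) : R := nth 0 P k.-1.

Definition elected {R : realType} (n f : nat) (P : seq R) (x : R) : bool :=
  (x <= Pk P f.+1) || (Pk P (n - f) <= x).

Definition destination {R : realType} (n f : nat) (P : seq R) (x : R) : R :=
  if elected n f P x
  then (Num.min x (Pk P (2 * f).+1) + Num.max x (Pk P (n - 2 * f))) / 2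
  else x.

Definition snapshot {R : realType} (n : nat) (pos : 'I_n -> R -> R) (t : R)
  : seq R := sort <=%R [seq pos j t | j <- enum 'I_n].

Definition dest_of {R : realType} (n f : nat) (pos : 'I_n -> R -> R)
  (L : 'I_n -> nat -> R) (i : 'I_n) (k : nat) : R :=
  destination n f (snapshot n pos (L i k)) (pos i (L i k)).

(* Robot i's k-th cycle: Look at L i k, Compute at C i k, Move during  *)
(* [M i k, E i k].  Byzantine robots (the set byz) move arbitrarily.   *)
Definition corda_execution {R : realType} (n f : nat) (byz : {set 'I_n})
  (delta : 'I_n -> R) (pos : 'I_n -> R -> R)
  (L C M E : 'I_n -> nat -> R) : Prop :=
  forall i, i \notin byz ->
  [/\
      (forall k, [/\ L i k <= C i k, C i k <= M i k, M i k <= E i k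
                   & E i k <= L i k.+1]),
      (forall T : R, exists k, T < L i k),
      (forall t, t <= M i 0 -> pos i t = pos i (M i 0)),
      (forall k t, E i k <= t <= M i k.+1 -> pos i t = pos i (E i k))
    & (* Move phase of cycle k: continuous monotone motion along the segment
         towards the computed destination, stopped by the adversary only
         after reaching it or after having moved at least delta i *)
      (forall k, exists lam : R -> R,
        let s := pos i (M i k) in
        let d := dest_of n f pos L i k in
        [/\ {within `[M i k, E i k], continuous lam},
            lam (M i k) = 0,
            (forall u v, M i k <= u -> u <= v -> v <= E i k -> lam u <= lam v),
            (forall t, M i k <= t <= E i k ->
               0 <= lam t <= 1 /\ pos i t = s + lam t * (d - s))
          & (lam (E i k) = 1 \/ delta i <= `|pos i (E i k) - s|)])].

(* k is the index of the last Compute of robot i at or before t;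
   D_i(t) is then dest_of .. i k and U^i(t) the correct positions in the
   snapshot of Look k. *)
Definition last_compute {R : realType} (n : nat) (C : 'I_n -> nat -> R)
  (i : 'I_n) (t : R) (k : nat) : Prop :=
  C i k <= t /\ (forall k', C i k' <= t -> (k' <= k)%N).

Definition gathered {R : realType} (n : nat) (byz : {set 'I_n})
  (pos : 'I_n -> R -> R) (t : R) : Prop :=
  forall i j, i \notin byz -> j \notin byz -> pos i t = pos j t.

Definition cautious {R : realType} (n f : nat) (byz : {set 'I_n})
  (pos : 'I_n -> R -> R) (L C : 'I_n -> nat -> R) : Prop :=
  (forall i t k, i \notin byz -> last_compute n C i t k ->
     (exists2 j, j \notin byz & pos j (L i k) <= dest_of n f pos L i k) /\
     (exists2 j, j \notin byz & dest_of n f pos L i k <= pos j (L i k)))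
  /\
  (forall t, ~ gathered n byz pos t ->
     exists i t' k, [/\ i \notin byz, t < t', last_compute n C i t' k
                      & dest_of n f pos L i k != pos i t']).

(* Main.v *)
Require Import Defs.
From HB Require Import structures.
From mathcomp Require Import all_boot all_order all_algebra.
From mathcomp Require Import all_classical all_reals all_analysis.
From mathcomp Require Import lra zify.
Import Order.TTheory GRing.Theory Num.Theory.
Import numFieldNormedType.Exports.
Local Open Scope ring_scope.
Local Open Scope classical_set_scope.
Lemma lam_one (R : realType) (lam : R -> R) (a b c : R) :
  {within `[a, b], continuous lam} -> a <= c -> c < b ->
  (forall v, c < v -> v < b -> lam v = 1) -> lam c = 1.
Proof.
move=> cl ac cb h1.
have ab : a < b by apply: le_lt_trans cb.
move/(continuous_within_itvP _ ab): cl => [cin cla _].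
have cr : lam x @[x --> c^'+] --> lam c.
  have [ea|ne] := eqVneq a c; first by rewrite -ea.
  apply: cvg_at_right_filter; apply: cin.
  by rewrite in_itv /= cb andbT lt_neqAle ne ac.
have nr : \forall v \near c^'+, (fun=> 1 : R) v = lam v.
  have := nbhs_right_lt cb; have := nbhs_right_gt c.
  apply: filterS2 => v h h'; exact/esym/h1.
have c1 : lam x @[x --> c^'+] --> (1:R).
  exact: (cvg_trans (@near_eq_cvg _ _ _ (at_right_proper_filter c) _ _ nr) (cvg_cst (1:R))).
exact: (@norm_cvg_unique _ _ (lam x @[x --> c^'+]) _ _ _ cr c1). Qed.
Local Close Scope classical_set_scope.
Lemma count_enum_card (n : nat) (p : pred 'I_n) : count p (enum 'I_n) = #|[set j | p j]|.
Proof. rewrite cardE /enum_mem size_filter count_filter; apply: eq_count => j; by rewrite !inE andbT. Qed.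
Lemma count_snap (R : realType) n (pos : 'I_n -> R -> R) T (p : pred R) :
  count p (sort <=%R [seq pos j T | j <- enum 'I_n]) = #|[set j | p (pos j T)]|.
Proof.
have /permPl hp := perm_sort <=%R [seq pos j T | j <- enum 'I_n].
rewrite (permP hp) count_map.
by rewrite -count_enum_card.
Qed.
Lemma count_down (R : realType) (s : seq R) (p : pred R) k :
  sorted <=%R s -> (k < size s)%N -> (forall x y, x <= y -> p y -> p x) ->
  p (nth 0 s k) -> (k.+1 <= count p s)%N.
Proof.
move=> ss ks pd pk.
rewrite -(cat_take_drop k.+1 s) count_cat.
have ha : all p (take k.+1 s).
  apply/(all_nthP 0) => j; rewrite (size_takel ks) => jk.
  rewrite nth_take //; apply: (pd _ _ _ pk).
  apply: (sorted_leq_nth le_trans lexx) => //.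
  rewrite unfold_in /=; exact: leq_trans jk ks.
have hc : count p (take k.+1 s) = size (take k.+1 s) by apply/eqP; rewrite -all_count.
rewrite hc (size_takel ks); exact: leq_addr.
Qed.
Lemma count_up (R : realType) (s : seq R) (p : pred R) k :
  sorted <=%R s -> (k < size s)%N -> (forall x y, x <= y -> p x -> p y) ->
  p (nth 0 s k) -> (size s - k <= count p s)%N.
Proof.
move=> ss ks pd pk.
rewrite -(cat_take_drop k s) count_cat.
have ha : all p (drop k s).
  apply/(all_nthP 0) => j; rewrite size_drop => jk.
  rewrite nth_drop; apply: (pd _ _ _ pk).
  apply: (sorted_leq_nth le_trans lexx) => //.
    by rewrite unfold_in /= -ltn_subRL.
  exact: leq_addr.
have hc : count p (drop k s) = size (drop k s) by apply/eqP; rewrite -all_count.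
rewrite hc size_drop cat_take_drop; exact: leq_addl.
Qed.

Lemma snap_sorted (R : realType) n (pos : 'I_n -> R -> R) T :
  sorted <=%R (snapshot n pos T).
Proof. exact: (sort_sorted le_total). Qed.

Lemma snap_size (R : realType) n (pos : 'I_n -> R -> R) T :
  size (snapshot n pos T) = n.
Proof. by rewrite size_sort size_map size_enum_ord. Qed.

Lemma snap_lt (R : realType) n (pos : 'I_n -> R -> R) T k a :
  (k < n)%N -> nth 0 (snapshot n pos T) k < a -> (k.+1 <= #|[set j | (pos j T < a)%R]|)%N.
Proof.
move=> kn h; rewrite -(count_snap R n pos T (fun x => x < a)).
apply: count_down => //; first exact: snap_sorted.
  by rewrite snap_size.
by move=> x y xy ya; apply: le_lt_trans ya.
Qed.

Lemma snap_le (R : realType) n (pos : 'I_n -> R -> R) T k a :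
  (k < n)%N -> nth 0 (snapshot n pos T) k <= a -> (k.+1 <= #|[set j | (pos j T <= a)%R]|)%N.
Proof.
move=> kn h; rewrite -(count_snap R n pos T (fun x => x <= a)).
apply: count_down => //; first exact: snap_sorted.
  by rewrite snap_size.
by move=> x y xy ya; apply: le_trans ya.
Qed.

Lemma snap_gt (R : realType) n (pos : 'I_n -> R -> R) T k a :
  (k < n)%N -> a < nth 0 (snapshot n pos T) k -> (n - k <= #|[set j | (a < pos j T)%R]|)%N.
Proof.
move=> kn h; rewrite -(count_snap R n pos T (fun x => a < x)) -{1}(snap_size R n pos T).
apply: count_up => //; first exact: snap_sorted.
  by rewrite snap_size.
by move=> x y xy ya; apply: lt_le_trans xy.
Qed.

Lemma snap_ge (R : realType) n (pos : 'I_n -> R -> R) T k a :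
  (k < n)%N -> a <= nth 0 (snapshot n pos T) k -> (n - k <= #|[set j | (a <= pos j T)%R]|)%N.
Proof.
move=> kn h; rewrite -(count_snap R n pos T (fun x => a <= x)) -{1}(snap_size R n pos T).
apply: count_up => //; first exact: snap_sorted.
  by rewrite snap_size.
by move=> x y xy ya; apply: le_trans xy.
Qed.

Lemma card_sub_byz n (byz : {set 'I_n}) (q : pred 'I_n) :
  (forall j, j \notin byz -> ~~ q j) -> (#|[set j | q j]| <= #|byz|)%N.
Proof.
move=> h; apply: subset_leq_card; apply/fintype.subsetP => j; rewrite inE => qj.
by apply/negPn/negP => /h; rewrite qj.
Qed.

Lemma part1_lo (R : realType) n f (byz : {set 'I_n}) (pos : 'I_n -> R -> R) T (i : 'I_n) :
  (5 * f < n)%N -> (#|byz| <= f)%N -> i \notin byz ->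
  exists2 j, j \notin byz & pos j T <= destination n f (snapshot n pos T) (pos i T).
Proof.
move=> hn hb hi.
case: (@arg_minP _ _ _ i (fun j => j \notin byz) (fun j => pos j T) hi) => jm hjm hmin.
exists jm => //.
have h2 : pos jm T <= Pk (snapshot n pos T) (2 * f).+1.
  rewrite /Pk /= leNgt; apply/negP => hlt.
  have hk : (2 * f < n)%N by lia.
  have h1 := @snap_lt _ n pos T (2 * f)%N _ hk hlt.
  have h3 := @card_sub_byz _ byz (fun j => (pos j T < pos jm T)%R)
    (fun j hj => ltac:(by rewrite -leNgt; exact: hmin)).
  have := leq_trans h1 h3; lia.
rewrite /destination; case: ifP => _; last exact: hmin.
have : pos jm T <= Num.min (pos i T) (Pk (snapshot n pos T) (2 * f).+1).
  by rewrite le_min h2 hmin.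
have : pos jm T <= Num.max (pos i T) (Pk (snapshot n pos T) (n - 2 * f)).
  by rewrite le_max hmin.
lra.
Qed.

Lemma part1_hi (R : realType) n f (byz : {set 'I_n}) (pos : 'I_n -> R -> R) T (i : 'I_n) :
  (5 * f < n)%N -> (#|byz| <= f)%N -> i \notin byz ->
  exists2 j, j \notin byz & destination n f (snapshot n pos T) (pos i T) <= pos j T.
Proof.
move=> hn hb hi.
case: (@arg_maxP _ _ _ i (fun j => j \notin byz) (fun j => pos j T) hi) => jm hjm hmax0.
have hmax : forall j, j \notin byz -> pos j T <= pos jm T by exact: hmax0.
exists jm => //.
have h2 : Pk (snapshot n pos T) (n - 2 * f) <= pos jm T.
  rewrite /Pk leNgt; apply/negP => hlt.
  have hk : ((n - 2 * f).-1 < n)%N by lia.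
  have h1 := @snap_gt _ n pos T (n - 2 * f).-1 _ hk hlt.
  have h3 := @card_sub_byz _ byz (fun j => (pos jm T < pos j T)%R)
    (fun j hj => ltac:(by rewrite -leNgt; exact: hmax)).
  have := leq_trans h1 h3; lia.
rewrite /destination; case: ifP => _; last exact: hmax.
have : Num.min (pos i T) (Pk (snapshot n pos T) (2 * f).+1) <= pos jm T.
  by rewrite ge_min (hmax i hi).
have : Num.max (pos i T) (Pk (snapshot n pos T) (n - 2 * f)) <= pos jm T.
  by rewrite ge_max h2 (hmax i hi).
lra.
Qed.

Lemma comb (R : realType) n f (byz : {set 'I_n}) (pos : 'I_n -> R -> R) TA TB (a b : R) :
  (5 * f < n)%N -> (#|byz| <= f)%N -> a < b ->
  (forall j, j \notin byz -> pos j TA = pos j TB) ->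
  (forall j, j \notin byz -> a <= pos j TA) ->
  (forall j, j \notin byz -> pos j TB <= b) ->
  destination n f (snapshot n pos TA) a = a ->
  destination n f (snapshot n pos TB) b = b -> False.
Proof.
move=> hn hb ab heq hlo hhi hdA hdB.
have hlt_a : forall k, (f < k.+1)%N -> (k < n)%N -> a <= nth 0 (snapshot n pos TA) k.
  move=> k fk kn; rewrite leNgt; apply/negP => hlt.
  have h1 := @snap_lt _ n pos TA k _ kn hlt.
  have h3 := @card_sub_byz _ byz (fun j => (pos j TA < a)%R)
    (fun j hj => ltac:(by rewrite -leNgt; exact: hlo)).
  have := leq_trans h1 h3; lia.
have hgt_b : forall k, (n - k > f)%N -> (k < n)%N -> nth 0 (snapshot n pos TB) k <= b.
  move=> k fk' kn; rewrite leNgt; apply/negP => hlt.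
  have h1 := @snap_gt _ n pos TB k _ kn hlt.
  have h3 := @card_sub_byz _ byz (fun j => (b < pos j TB)%R)
    (fun j hj => ltac:(by rewrite -leNgt; exact: hhi)).
  have := leq_trans h1 h3; lia.
have hA1 : a <= Pk (snapshot n pos TA) f.+1 by apply: hlt_a; lia.
have hA2 : a <= Pk (snapshot n pos TA) (2 * f).+1 by apply: hlt_a; lia.
move: hdA; rewrite /destination /elected hA1 /= (min_l hA2) => hdA.
have hA3 : Pk (snapshot n pos TA) (n - 2 * f) <= a.
  have : Pk (snapshot n pos TA) (n - 2 * f) <= Num.max a (Pk (snapshot n pos TA) (n - 2 * f)).
    by rewrite le_max lexx orbT.
  lra.
have cA := @snap_le _ n pos TA (n - 2 * f).-1 a (ltac:(lia)) hA3.
have hB1 : Pk (snapshot n pos TB) (n - f) <= b by apply: hgt_b; lia.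
have hB2 : Pk (snapshot n pos TB) (n - 2 * f) <= b by apply: hgt_b; lia.
move: hdB; rewrite /destination /elected hB1 orbT (max_l hB2) => hdB.
have hB3 : b <= Pk (snapshot n pos TB) (2 * f).+1.
  have : Num.min b (Pk (snapshot n pos TB) (2 * f).+1) <= Pk (snapshot n pos TB) (2 * f).+1.
    by rewrite ge_min lexx orbT.
  lra.
have cB := @snap_ge _ n pos TB (2 * f) b (ltac:(lia)) hB3.
set A := [set j | (pos j TA <= a)%R] in cA.
set B := [set j | (b <= pos j TB)%R] in cB.
have hI : A :&: B = [set j | (pos j TA <= a)%R && (b <= pos j TB)%R].
  by apply/setP => j; rewrite !inE.
have cI : (#|A :&: B| <= #|byz|)%N.
  rewrite hI; apply: card_sub_byz => j hj; apply/negP => /andP[h1 h2].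
  have := heq j hj; have := hlo j hj; lra.
have cU : (#|A :|: B| <= n)%N by rewrite -[X in (_ <= X)%N]card_ord; exact: max_card.
have := cardsUI A B; lia.
Qed.

Local Open Scope classical_set_scope.
Definition move_ok {R : realType} (posi : R -> R) (m e d del : R) : Prop :=
  exists lam : R -> R,
  [/\ {within `[m, e], continuous lam}, lam m = 0,
      (forall u v, m <= u -> u <= v -> v <= e -> lam u <= lam v),
      (forall t, m <= t <= e -> 0 <= lam t <= 1 /\ posi t = posi m + lam t * (d - posi m))
    & (lam e = 1 \/ del <= `|posi e - posi m|)].
Local Close Scope classical_set_scope.

Section Robot.
Set Implicit Arguments.
Unset Strict Implicit.
Variable R : realType.

Lemma chainLE (Li Ci Mi Ei : nat -> R) :
  (forall k, [/\ Li k <= Ci k, Ci k <= Mi k, Mi k <= Ei k & Ei k <= Li k.+1]) ->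
  forall k k', (k < k')%N -> Ei k <= Li k'.
Proof.
move=> hk k; elim=> // k' IH; rewrite ltnS leq_eqVlt => /orP[/eqP->|h].
  by case: (hk k').
apply: le_trans (IH h) _; case: (hk k') => h1 h2 h3 h4.
exact: le_trans h1 (le_trans h2 (le_trans h3 h4)).
Qed.

Lemma Lmono (Li Ci Mi Ei : nat -> R) :
  (forall k, [/\ Li k <= Ci k, Ci k <= Mi k, Mi k <= Ei k & Ei k <= Li k.+1]) ->
  forall k k', (k <= k')%N -> Li k <= Li k'.
Proof.
move=> hk k k'; rewrite leq_eqVlt => /orP[/eqP->//|h].
have := chainLE hk h; case: (hk k) => h1 h2 h3 _ h5.
exact: le_trans h1 (le_trans h2 (le_trans h3 h5)).
Qed.

Lemma last_in_move (Li Ci Mi Ei : nat -> R) k v :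
  (forall k, [/\ Li k <= Ci k, Ci k <= Mi k, Mi k <= Ei k & Ei k <= Li k.+1]) ->
  Mi k <= v -> v < Ei k -> Ci k <= v /\ (forall k', Ci k' <= v -> (k' <= k)%N).
Proof.
move=> hk Mv vE; split; first by case: (hk k) => _ h _ _; exact: le_trans h Mv.
move=> k' Ck; rewrite leqNgt; apply/negP => kk.
have := chainLE hk kk; case: (hk k') => h1 _ _ _ h.
have := le_trans h (le_trans h1 Ck); lra.
Qed.

Lemma last_exists (Li Ci Mi Ei : nat -> R) k0 T :
  (forall k, [/\ Li k <= Ci k, Ci k <= Mi k, Mi k <= Ei k & Ei k <= Li k.+1]) ->
  (forall T, exists k, T < Li k) -> Ci k0 <= T ->
  exists k, [/\ Ci k <= T, (forall k', Ci k' <= T -> (k' <= k)%N) & (k0 <= k)%N].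
Proof.
move=> hk hunb hC.
have [K hK] := hunb T.
have ub : forall k, (fun k => Ci k <= T) k -> (k <= K)%N.
  move=> k /= Ck; rewrite leqNgt; apply/negP => Kk.
  have := Lmono hk (ltnW Kk); case: (hk k) => h1 _ _ _ h.
  have := le_trans h (le_trans h1 Ck); lra.
case: (@ex_maxnP (fun k => Ci k <= T) K (ex_intro _ k0 hC) ub) => k Ck hmax.
by exists k; split => //; apply: hmax.
Qed.

Lemma M_lt_E (posi : R -> R) m e d del :
  0 < del -> m <= e -> move_ok posi m e d del -> m < e.
Proof.
move=> hdel me [lam [_ l0 _ lpos lend]].
rewrite lt_neqAle me andbT; apply/negP => /eqP me'.
rewrite -me' l0 subrr normr0 in lend.
case: lend => h; [ have : (0:R) = 1 by [] | ]; lra.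
Qed.
End Robot.

Section Robot2.
Set Implicit Arguments.
Unset Strict Implicit.
Variable R : realType.

Lemma move_const (Li Ci Mi Ei : nat -> R) (posi : R -> R) (dk : nat -> R) (del t : R) k :
  (forall k, [/\ Li k <= Ci k, Ci k <= Mi k, Mi k <= Ei k & Ei k <= Li k.+1]) ->
  0 < del -> move_ok posi (Mi k) (Ei k) (dk k) del ->
  (forall t' k', t < t' -> Ci k' <= t' -> (forall k'', Ci k'' <= t' -> (k'' <= k')%N) ->
     dk k' = posi t') ->
  forall u, t <= u -> Mi k <= u -> u <= Ei k -> t < Ei k -> posi u = dk k.
Proof.
move=> hk hdel hmv H u tu Mu uE tE.
have ME : Mi k < Ei k.
  by apply: M_lt_E hdel _ hmv; case: (hk k).
case: hmv => lam [lc l0 lmono lpos lend].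
set s := posi (Mi k).
set a := Num.max t (Mi k).
have aE : a < Ei k by rewrite gt_max tE ME.
have Ma : Mi k <= a by rewrite le_max lexx orbT.
have au : a <= u by rewrite ge_max tu Mu.
have hv : forall v, a < v -> v < Ei k -> posi v = dk k.
  move=> v av vE; move: av; rewrite gt_max => /andP[tv Mv].
  have [h1 h2] := last_in_move hk (ltW Mv) vE.
  by rewrite (H v k tv h1 h2).
have [hd|hd] := eqVneq (dk k) s.
  have [_ ->] := lpos u (ltac:(by rewrite Mu uE)).
  by rewrite -/s hd subrr mulr0 addr0.
have l1 : forall v, a < v -> v < Ei k -> lam v = 1.
  move=> v av vE.
  have Mv : Mi k <= v by apply: le_trans Ma (ltW av).
  have [_ hp] := lpos v (ltac:(by rewrite Mv (ltW vE))).
  rewrite (hv v av vE) -/s in hp.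
  have : (lam v - 1) * (dk k - s) = 0.
    rewrite mulrBl mul1r; move: hp; set w := lam v * (dk k - s); lra.
  move/eqP; rewrite mulf_eq0 subr_eq0 => /orP[/eqP //|].
  by rewrite subr_eq0 (negPf hd).
have la : lam a = 1 by exact: (@lam_one R lam (Mi k) (Ei k) a lc Ma aE l1).
have [/andP[_ lu1] hp] := lpos u (ltac:(by rewrite Mu uE)).
have lau : lam a <= lam u by apply: lmono.
have lu : lam u = 1 by apply/eqP; rewrite eq_le lu1 -la lau.
by rewrite hp lu mul1r addrC subrK.
Qed.

End Robot2.

Section Robot3.
Set Implicit Arguments.
Unset Strict Implicit.
Variable R : realType.

Lemma stuck (Li Ci Mi Ei : nat -> R) (posi : R -> R) (dk : nat -> R) (del t : R) :
  (forall k, [/\ Li k <= Ci k, Ci k <= Mi k, Mi k <= Ei k & Ei k <= Li k.+1]) ->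
  (forall T, exists k, T < Li k) ->
  (forall u, u <= Mi 0 -> posi u = posi (Mi 0)) ->
  (forall k u, Ei k <= u <= Mi k.+1 -> posi u = posi (Ei k)) ->
  0 < del -> (forall k, move_ok posi (Mi k) (Ei k) (dk k) del) ->
  (forall t' k', t < t' -> Ci k' <= t' -> (forall k'', Ci k'' <= t' -> (k'' <= k')%N) ->
     dk k' = posi t') ->
  forall u, t <= u -> posi u = posi t.
Proof.
move=> hk hunb h0 hgap hdel hmv H.
have MltE k : Mi k < Ei k by apply: M_lt_E hdel _ (hmv k); case: (hk k).
have mc k := move_const hk hdel (hmv k) H.
suff hP : forall k u, t <= u -> u <= Mi k -> posi u = posi t.
  move=> u tu; have [k hk'] := hunb u; apply: (hP k) => //.
  case: (hk k) => h1 h2 _ _; apply: le_trans (ltW hk') (le_trans h1 h2).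
elim=> [|k IH] u tu uM.
  by rewrite h0 // (h0 t) //; apply: le_trans tu uM.
have mid : forall v, t <= v -> Mi k < v -> v <= Ei k -> posi v = posi t.
  move=> v tv Mv vE.
  case: (leP t (Mi k)) => tM.
    have tE := le_lt_trans tM (MltE k).
    rewrite (mc k v tv (ltW Mv) vE tE) -(mc k (Mi k) tM (lexx _) (ltW (MltE k)) tE).
    exact: IH.
  case: (ltP t (Ei k)) => tE.
    by rewrite (mc k v tv (ltW Mv) vE tE) (mc k t (lexx _) (ltW tM) (ltW tE) tE).
  have -> : v = t by apply/eqP; rewrite eq_le tv andbT; apply: le_trans vE tE.
  by [].
case: (leP u (Mi k)) => uMk; first exact: IH.
case: (leP u (Ei k)) => uE; first exact: mid.
rewrite (hgap k u); last by rewrite (ltW uE) uM.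
case: (leP t (Ei k)) => tE.
  by apply: mid => //; exact: MltE.
by rewrite -(hgap k t) // (ltW tE) (le_trans tu uM).
Qed.

End Robot3.

Theorem lemma7 (R : realType) (n f : nat) (byz : {set 'I_n})
  (delta : 'I_n -> R) (pos : 'I_n -> R -> R) (L C M E : 'I_n -> nat -> R) :
  (5 * f < n)%N ->
  (#|byz| <= f)%N ->
  (forall i, 0 < delta i) ->
  corda_execution n f byz delta pos L C M E ->
  cautious n f byz pos L C.
Proof.
move=> hn hb hdel hcorda; split.
  move=> i t k hi _; rewrite /dest_of; split.
    exact: part1_lo.
  exact: part1_hi.
move=> t ng.
case: (pselect (exists i t' k, [/\ i \notin byz, t < t', last_compute n C i t' k
                      & dest_of n f pos L i k != pos i t'])) => // nex.
exfalso.
have H : forall i t' k, i \notin byz -> t < t' -> C i k <= t' ->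
    (forall k', C i k' <= t' -> (k' <= k)%N) -> dest_of n f pos L i k = pos i t'.
  move=> i t' k hi tt hc hm; apply: contrapT => hne; apply: nex.
  by exists i, t', k; split => //; apply/eqP.
have st : forall i, i \notin byz -> forall u, t <= u -> pos i u = pos i t.
  move=> i hi; have [hk hunb h0 hgap hmv] := hcorda i hi.
  have hmv' : forall k, move_ok (pos i) (M i k) (E i k) (dest_of n f pos L i k) (delta i).
    move=> k; exact: hmv k.
  have := @stuck R (L i) (C i) (M i) (E i) (pos i) (dest_of n f pos L i) (delta i) t hk hunb h0.
  move=> /(_ hgap (hdel i) hmv').
  move=> /(_ (fun t' k => H i t' k hi)).
  exact.
have [i0 hi0] : exists i0, i0 \notin byz.
  apply: contrapT => ne; apply: ng => i j hi _; case: ne; by exists i.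
case: (@arg_minP _ _ _ i0 (fun j => j \notin byz) (fun j => pos j t) hi0) => ia hia hmin.
case: (@arg_maxP _ _ _ i0 (fun j => j \notin byz) (fun j => pos j t) hi0) => ib hib hmax0.
have hmax : forall j, j \notin byz -> pos j t <= pos ib t by exact: hmax0.
have ab : pos ia t < pos ib t.
  rewrite lt_neqAle hmin // andbT; apply/negP => /eqP eab; apply: ng => i j hi hj.
  have := hmin i hi; have := hmax i hi; have := hmin j hj; have := hmax j hj; lra.
have [hkA hunbA _ _ _] := hcorda ia hia.
have [k0 hk0] := hunbA t.
have tC : t < C ia k0 by case: (hkA k0) => h1 _ _ _; exact: lt_le_trans hk0 h1.
have [kA [hCA hmA k0A]] := last_exists hkA hunbA (lexx (C ia k0)).
have tLA : t < L ia kA := lt_le_trans hk0 (Lmono hkA k0A).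
have dA : dest_of n f pos L ia kA = pos ia t.
  by rewrite (H ia (C ia k0) kA hia tC hCA hmA) (st ia hia) // ltW.
have [hkB hunbB _ _ _] := hcorda ib hib.
have [k1 hk1] := hunbB t.
have tC1 : t < C ib k1 by case: (hkB k1) => h1 _ _ _; exact: lt_le_trans hk1 h1.
have [kB [hCB hmB k1B]] := last_exists hkB hunbB (lexx (C ib k1)).
have tLB : t < L ib kB := lt_le_trans hk1 (Lmono hkB k1B).
have dB : dest_of n f pos L ib kB = pos ib t.
  by rewrite (H ib (C ib k1) kB hib tC1 hCB hmB) (st ib hib) // ltW.
apply: (@comb R n f byz pos (L ia kA) (L ib kB) (pos ia t) (pos ib t) hn hb ab).
- by move=> j hj; rewrite !(st j hj) // ltW.
- by move=> j hj; rewrite (st j hj) ?(ltW tLA) //; exact: hmin.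
- by move=> j hj; rewrite (st j hj) ?(ltW tLB) //; exact: hmax.
- by move: dA; rewrite /dest_of (st ia hia _ (ltW tLA)).
- by move: dB; rewrite /dest_of (st ib hib _ (ltW tLB)).
Qed.
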